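(* Let $\mathcal M$ be a matroid on a finite ground set $V$ with $|V|=n$ and $\zeta(\mathcal M)=\zeta$, and let $g$ be a positive integer with $g\le\frac{n}{\zeta}$. Then $\zeta(\mathcal M^g)=\frac{n}{g}$, where $\mathcal M^g=\{A\in\mathcal M: |A|\le g\}$.
   Context: A simplicial complex $\mathcal C$ on ground set $V(\mathcal C)$ is a family of subsets closed under taking subsets. A matroid is a complex in which, for every subset $W$ of the ground set, all maximal members contained in $W$ have the same size. For a complex $\mathcal C$, $\mathrm{rank}(\mathcal C)$ is the maximal size of a member, $\mathcal C[S]$ is the set of members of $\mathcal C$ contained in $S$, and $\zeta(\mathcal C)=\max_{S\subseteq V(\mathcal C)}\frac{|S|}{\mathrm{rank}(\mathcal C[S])}$ (over nonempty $S$). The complex $\mathcal M^g$ is regarded as a complex on the same ground set $V$. *)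

(* Defs.v *)
From mathcomp Require Import all_boot all_order all_algebra.
Set Implicit Arguments. Unset Strict Implicit. Unset Printing Implicit Defensive.
Import Order.TTheory GRing.Theory Num.Theory.

Definition is_complex (V : finType) (C : {set {set V}}) : Prop :=
  forall A B : {set V}, A \in C -> B \subset A -> B \in C.

Definition maximal_in (V : finType) (C : {set {set V}}) (W A : {set V}) : Prop :=
  [/\ A \in C, A \subset W &
      forall B : {set V}, B \in C -> B \subset W -> A \subset B -> B = A].

Definition is_matroid (V : finType) (M : {set {set V}}) : Prop :=
  is_complex M /\
  forall W A B : {set V}, maximal_in M W A -> maximal_in M W B -> #|A| = #|B|.

Definition restrict (V : finType) (C : {set {set V}}) (S : {set V}) : {set {set V}} :=
  [set A in C | A \subset S].

(* rank : maximal size of a member (0 for the empty family) *)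
Definition rank (V : finType) (C : {set {set V}}) : nat :=
  \max_(A in C) #|A|.

(* zeta C = max over nonempty S of |S| / rank(C[S]).  The value is in
   option rat, with None standing for +infinity (some nonempty S has
   rank(C[S]) = 0). *)
Definition zeta (V : finType) (C : {set {set V}}) : option rat :=
  if [exists S : {set V}, (S != set0) && (rank (restrict C S) == 0%N)]
  then None
  else Some (\big[Num.max/0%R]_(S : {set V} | S != set0)
               ((#|S|%:R : rat) / (rank (restrict C S))%:R)%R).

Definition truncation (V : finType) (M : {set {set V}}) (g : nat) : {set {set V}} :=
  [set A in M | #|A| <= g].

(* Main.v *)
Require Import Defs.
From mathcomp Require Import all_boot all_order all_algebra.
Import Order.TTheory GRing.Theory Num.Theory.

Lemma subset_card_ex (V : finType) (A : {set V}) (k : nat) :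
  (k <= #|A|)%N -> exists2 B : {set V}, B \subset A & #|B| = k.
Proof.
elim: k => [|k IH] hk; first by exists set0; rewrite ?sub0set ?cards0.
have [B BA cB] := IH (ltnW hk).
have : (0 < #|A :\: B|)%N by rewrite cardsD (setIidPr BA) cB subn_gt0.
case/card_gt0P => x; rewrite in_setD => /andP [xB xA].
exists (x |: B); first by rewrite subUset sub1set xA BA.
by rewrite cardsU1 xB cB.
Qed.

Lemma rank_trunc (V : finType) (M : {set {set V}}) g S :
  is_complex M ->
  rank (restrict (truncation M g) S) = minn g (rank (restrict M S)).
Proof.
move=> HC; apply/eqP; rewrite eqn_leq; apply/andP; split.
  apply/bigmax_leqP => A; rewrite !inE => /andP [/andP [AM Ag] AS].
  rewrite leq_min Ag /=.
  by apply: (leq_bigmax_cond (F := fun A : {set V} => #|A|)); rewrite !inE AM AS.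
case: (posnP (rank (restrict M S))) => [->|rp]; first by rewrite minn0.
have : (0 < #|restrict M S|)%N.
  apply/card_gt0P; move: rp; rewrite /rank.
  case: (set_0Vmem (restrict M S)) => [->|[A HA]]; last by exists A.
  by rewrite big_set0.
move/(eq_bigmax_cond (fun A : {set V} => #|A|)) => [A0 HA0 E].
have [B BA cB] := @subset_card_ex _ A0 (minn g #|A0|) (geq_minr _ _).
move: HA0; rewrite inE => /andP [A0M A0S].
rewrite /rank E -cB.
apply: (leq_bigmax_cond (F := fun A : {set V} => #|A|)).
rewrite !inE (HC _ _ A0M BA) cB geq_minl /=.
exact: subset_trans BA A0S.
Qed.

Theorem lemma4p1 (V : finType) (M : {set {set V}}) (z : rat) (g : nat) :
  is_matroid M ->
  zeta M = Some z ->
  (0 < g)%N ->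
  (g%:R <= (#|V|%:R : rat) / z)%R ->
  zeta (truncation M g) = Some ((#|V|%:R : rat) / g%:R)%R.
Proof.
move=> [HC _] HZ g0 Hg.
move: HZ; rewrite /zeta.
case: ifP => // /negbT Hne [Hz].
have rpos : forall S : {set V}, S != set0 -> (0 < rank (restrict M S))%N.
  move=> S SN; rewrite lt0n; apply/negP => /eqP E.
  by move/negP: Hne; apply; apply/existsP; exists S; rewrite SN E eqxx.
have n0 : (0 < #|V|)%N.
  rewrite lt0n; apply/negP => /eqP E; move: Hg; rewrite E mul0r.
  by rewrite leNgt ltr0n g0.
have TN : [set: V] != set0 by rewrite -card_gt0 cardsT.
have zval : forall S : {set V}, S != set0 ->
   ((#|S|%:R : rat) / (rank (restrict M S))%:R <= z)%R.
  move=> S SN; rewrite -Hz.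
  exact: (le_bigmax_cond (P := fun S : {set V} => S != set0) 0%R
     (fun S => ((#|S|%:R : rat) / (rank (restrict M S))%:R)%R) SN).
have zpos : (0 < z)%R.
  apply: lt_le_trans (zval _ TN).
  by rewrite divr_gt0 // ltr0n ?cardsT // rpos.
have zle : (z <= (#|V|%:R : rat) / g%:R)%R.
  by rewrite ler_pdivlMr ?ltr0n // mulrC -ler_pdivlMr.
rewrite ifF; last first.
  apply/negbTE/existsP => [[S /andP [SN /eqP]]].
  rewrite rank_trunc // => /eqP; apply/negP; rewrite -lt0n.
  by rewrite leq_min g0 rpos.
congr Some; apply/eqP; rewrite eq_le; apply/andP; split.
  apply: bigmax_le => [|S SN]; first by rewrite divr_ge0 ?ler0n.
  rewrite rank_trunc // .
  case: (leqP g (rank (restrict M S))) => hr.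
    rewrite ler_pM2r ?invr_gt0 ?ltr0n // ler_nat.
    by rewrite -cardsT subset_leq_card ?subsetT.
  apply: le_trans (zval _ SN) zle.
apply: le_trans (le_bigmax_cond (P := fun S : {set V} => S != set0) 0%R
   (fun S => ((#|S|%:R : rat) / (rank (restrict (truncation M g) S))%:R)%R) TN).
rewrite rank_trunc // cardsT ler_pM2l ?ltr0n //.
rewrite lef_pV2 ?ler_nat ?geq_minl //. all: by rewrite posrE ltr0n ?leq_min ?g0 ?rpos.
Qed.
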